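(* In the parallel-links routing game with standard costs described in the context, the $N$-player bargaining problem $(\mathcal G,\hat{\mathbf J})$ need not be essential: there exist instances in which the NBS cost vector coincides with the NEP cost vector. Moreover, the Price of Selfishness (hence also the Price of Anarchy) can be arbitrarily large: for every $K>0$ there is an instance with standard costs such that $PoS\ge K$.
   Context: Parallel-links routing game: users $\mathcal N=\{1,\dots,N\}$ share parallel links $\mathcal L=\{1,\dots,L\}$ from a common source to a common destination. User $i$ has demand $r^i>0$. A routing strategy of user $i$ is $\mathbf f^i=(f^i_l)_l$ with $f^i_l\ge0$, $\sum_lf^i_l=r^i$; feasible profiles form $\mathbf F$; $f_l=\sum_if^i_l$. Standard costs: $J^i(\mathbf f)=\sum_lJ^i_l(f^i_l,f_l)$ where each $J^i_l:[0,\infty)^2\to[0,\infty)$ is continuous, increasing in each argument, convex and continuously differentiable in $f^i_l$, and whenever $J^i_l$ is finite, $\partial J^i_l/\partial f^i_l(f^i_l,f_l)$ is strictly increasing in each argument. NEP: a feasible $\hat{\mathbf f}$ such that each $\hat{\mathbf f}^i$ minimizes $J^i$ over user $i$'s feasible strategies given the others'; with standard costs it exists and is unique. $\hat J^i=J^i(\hat{\mathbf f})$, $\hat J_{sys}=\sum_i\hat J^i$. Social cost $J_{sys}=\sum_iJ^i$; $J^*_{sys}$ its minimum over $\mathbf F$; $PoA=\hat J_{sys}/J^*_{sys}$. Bargaining: $\mathcal G$ is the set of all vectors $\sum_{m=1}^Mp_m(J^1(\mathbf f(m)),\dots,J^N(\mathbf f(m)))$ with $M$ finite, $p_m>0$,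 $\sum_mp_m=1$, $\mathbf f(m)\in\mathbf F$. The problem is essential if some $\mathbf g\in\mathcal G$ has $g^i<\hat J^i$ for all $i$. The NBS is the unique $\tilde{\mathbf g}$ maximizing $\prod_i(\hat J^i-g^i)$ over $\mathbf g\in\mathcal G$ with $g^i\le\hat J^i$ for all $i$. $PoS=(\sum_i\tilde g^i)/J^*_{sys}$. *)

(* Defs.v *)
From Stdlib Require Import Reals.
From Coquelicot Require Import Coquelicot.
From mathcomp Require Import ssreflect ssrfun ssrbool eqtype ssrnat seq fintype bigop.

Set Implicit Arguments.
Unset Strict Implicit.
Unset Printing Implicit Defensive.

Local Open Scope R_scope.

Notation "\rsum_ ( i < n ) F" := (\big[Rplus/0%R]_(i < n) F)
  (at level 41, F at level 41, i, n at level 50).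
Notation "\rprod_ ( i < n ) F" := (\big[Rmult/1%R]_(i < n) F)
  (at level 36, F at level 36, i, n at level 50).

(* Standard link costs  J : [0,oo)^2 -> [0,oo),  (x, y) = (f^i_l, f_l) *)

Definition has_derivative_on_nonneg (g dg : R -> R) : Prop :=
  forall x, 0 <= x ->
    filterlim (fun h => (g (x + h) - g x) / h)
      (within (fun h => h <> 0 /\ 0 <= x + h) (locally 0))
      (locally (dg x)).

Definition continuous_on_nonneg (g : R -> R) : Prop :=
  forall x, 0 <= x ->
    filterlim g (within (fun t => 0 <= t) (locally x)) (locally (g x)).

Definition standard_link_cost (J : R -> R -> R) : Prop :=
  (forall x y, 0 <= x -> 0 <= y -> 0 <= J x y) /\
  (forall x y, 0 <= x -> 0 <= y ->
     filterlim (fun p : R * R => J (fst p) (snd p))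
       (within (fun p : R * R => 0 <= fst p /\ 0 <= snd p) (locally (x, y)))
       (locally (J x y))) /\
  (forall x x' y, 0 <= x -> x <= x' -> 0 <= y -> J x y <= J x' y) /\
  (forall x y y', 0 <= x -> 0 <= y -> y <= y' -> J x y <= J x y') /\
  (forall y a b t, 0 <= y -> 0 <= a -> 0 <= b -> 0 <= t <= 1 ->
     J ((1 - t) * a + t * b) y <= (1 - t) * J a y + t * J b y) /\
  (exists dJ : R -> R -> R,
     (forall y, 0 <= y ->
        has_derivative_on_nonneg (fun x => J x y) (fun x => dJ x y) /\
        continuous_on_nonneg (fun x => dJ x y)) /\
     (forall x x' y, 0 <= x -> x < x' -> 0 <= y -> dJ x y < dJ x' y) /\
     (forall x y y', 0 <= x -> 0 <= y -> y < y' -> dJ x y < dJ x y')).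

Definition profile (N L : nat) := 'I_N -> 'I_L -> R.

Definition standard_costs (N L : nat) (J : 'I_N -> 'I_L -> R -> R -> R) : Prop :=
  forall i l, standard_link_cost (J i l).

Definition feasible (N L : nat) (r : 'I_N -> R) (f : profile N L) : Prop :=
  (forall i l, 0 <= f i l) /\ (forall i, \rsum_(l < L) f i l = r i).

Definition link_flow (N L : nat) (f : profile N L) (l : 'I_L) : R :=
  \rsum_(i < N) f i l.

Definition user_cost (N L : nat) (J : 'I_N -> 'I_L -> R -> R -> R)
  (f : profile N L) (i : 'I_N) : R :=
  \rsum_(l < L) J i l (f i l) (link_flow f l).

Definition sys_cost (N L : nat) (J : 'I_N -> 'I_L -> R -> R -> R)
  (f : profile N L) : R :=
  \rsum_(i < N) user_cost J f i.

Definition is_NEP (N L : nat) (r : 'I_N -> R) (J : 'I_N -> 'I_L -> R -> R -> R)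
  (f : profile N L) : Prop :=
  feasible r f /\
  forall (i : 'I_N) (g : profile N L),
    feasible r g -> (forall j l, j <> i -> g j l = f j l) ->
    user_cost J f i <= user_cost J g i.

Definition is_social_opt (N L : nat) (r : 'I_N -> R)
  (J : 'I_N -> 'I_L -> R -> R -> R) (f : profile N L) : Prop :=
  feasible r f /\ forall g, feasible r g -> sys_cost J f <= sys_cost J g.

Definition in_G (N L : nat) (r : 'I_N -> R) (J : 'I_N -> 'I_L -> R -> R -> R)
  (g : 'I_N -> R) : Prop :=
  exists (M : nat) (p : 'I_M -> R) (fs : 'I_M -> profile N L),
    (forall m, 0 < p m) /\ \rsum_(m < M) p m = 1 /\
    (forall m, feasible r (fs m)) /\
    (forall i, g i = \rsum_(m < M) p m * user_cost J (fs m) i).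

Definition essential (N L : nat) (r : 'I_N -> R) (J : 'I_N -> 'I_L -> R -> R -> R)
  (Jhat : 'I_N -> R) : Prop :=
  exists g, in_G r J g /\ forall i, g i < Jhat i.

Definition nash_product (N : nat) (Jhat g : 'I_N -> R) : R :=
  \rprod_(i < N) (Jhat i - g i).

Definition is_NBS (N L : nat) (r : 'I_N -> R) (J : 'I_N -> 'I_L -> R -> R -> R)
  (Jhat g : 'I_N -> R) : Prop :=
  in_G r J g /\ (forall i, g i <= Jhat i) /\
  (forall h, in_G r J h -> (forall i, h i <= Jhat i) ->
     nash_product Jhat h <= nash_product Jhat g) /\
  (forall h, in_G r J h -> (forall i, h i <= Jhat i) ->
     nash_product Jhat h = nash_product Jhat g -> forall i, h i = g i).

(* Main.v *)
Require Import Defs.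
From Stdlib Require Import Reals Lra Psatz.
From Coquelicot Require Import Coquelicot.
From HB Require Import structures.
From mathcomp Require Import ssreflect ssrfun ssrbool eqtype ssrnat seq fintype bigop.

Local Open Scope R_scope.

Lemma RplusA : associative Rplus. Proof. intros a b c; ring. Qed.
HB.instance Definition _ := Monoid.isComLaw.Build R 0%R Rplus RplusA Rplus_comm Rplus_0_l.

Definition kink (t : R) : R := (t + Rabs t) / 2.

Lemma kink_ge0 t : 0 <= kink t.
Proof. unfold kink; pose proof (Rle_abs (-t)); rewrite Rabs_Ropp in H; lra. Qed.
Lemma kink_ge t : t <= kink t.
Proof. unfold kink; pose proof (Rle_abs t); lra. Qed.
Lemma kink_neg t : t <= 0 -> kink t = 0.
Proof. intro; unfold kink; rewrite Rabs_left1 //; lra. Qed.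
Lemma kink_pos t : 0 <= t -> kink t = t.
Proof. intro; unfold kink; rewrite Rabs_pos_eq //; lra. Qed.
Lemma kink_mono t t' : t <= t' -> kink t <= kink t'.
Proof.
  intro; destruct (Rle_dec t 0); destruct (Rle_dec t' 0).
  - rewrite !kink_neg //; lra.
  - rewrite kink_neg // kink_pos; lra.
  - lra.
  - rewrite !kink_pos; lra.
Qed.

Definition gf (c m y : R) : R := c + y + m * kink (y - 1).
Definition Jf (c m : R) (x y : R) : R := x * x + x * gf c m y.

Lemma gf_ge0 c m y : 0 <= c -> 0 <= m -> 0 <= y -> 0 <= gf c m y.
Proof. intros; unfold gf; pose proof (kink_ge0 (y-1)); nra. Qed.

Lemma gf_mono c m y y' : 0 <= m -> y <= y' -> gf c m y <= gf c m y'.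
Proof. intros; unfold gf; pose proof (kink_mono (y-1) (y'-1)); nra. Qed.

Lemma gf_smono c m y y' : 0 <= m -> y < y' -> gf c m y < gf c m y'.
Proof. intros; unfold gf; pose proof (kink_mono (y-1) (y'-1)); nra. Qed.

Lemma cont_R (f : R -> R) (x : R) : continuous f x ->
  filterlim f (within (fun t => 0 <= t) (locally x)) (locally (f x)).
Proof. intro H; eapply filterlim_filter_le_1; [apply filter_le_within|exact H]. Qed.

Lemma cplus {U : UniformSpace} (f g : U -> R) x :
  continuous f x -> continuous g x -> continuous (fun y => f y + g y) x.
Proof. intros; apply (@continuous_plus U R_AbsRing R_NormedModule f g); auto. Qed.
Lemma cmult {U : UniformSpace} (f g : U -> R) x :
  continuous f x -> continuous g x -> continuous (fun y => f y * g y) x.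
Proof. intros; apply (@continuous_mult U R_AbsRing f g); auto. Qed.
Lemma cconst {U : UniformSpace} (c : R) (x : U) : continuous (fun _ => c) x.
Proof. apply continuous_const. Qed.

Lemma cont_kink (x : R) : continuous kink x.
Proof.
  unfold kink.
  apply (cmult (fun t => t + Rabs t) (fun _ => /2)); [|apply cconst].
  apply cplus; [apply continuous_id|apply continuous_Rabs].
Qed.

Lemma std_fam c m : 0 <= c -> 0 <= m -> standard_link_cost (Jf c m).
Proof.
  intros Hc Hm; unfold standard_link_cost, Jf.
  split; [|split; [|split; [|split; [|split]]]].
  - intros x y Hx Hy; pose proof (gf_ge0 c m y Hc Hm Hy); nra.
  - intros x y Hx Hy.
    eapply filterlim_filter_le_1; [apply filter_le_within|].
    unfold gf.
    apply (cplus (fun p : R * R => fst p * fst p)).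
    + apply cmult; apply continuous_fst.
    + apply cmult; [apply continuous_fst|].
      apply (cplus (fun p : R * R => c + snd p)).
      * apply cplus; [apply cconst|apply continuous_snd].
      * apply cmult; [apply cconst|].
        apply (continuous_comp (fun p : R*R => snd p - 1) kink).
        -- apply (cplus (fun p : R*R => snd p) (fun _ => -1)); [apply continuous_snd|apply cconst].
        -- apply cont_kink.
  - intros x x' y Hx Hxx Hy; pose proof (gf_ge0 c m y Hc Hm Hy); nra.
  - intros x y y' Hx Hy Hyy; pose proof (gf_mono c m y y' Hm Hyy); nra.
  - intros y a b t Hy Ha Hb Ht; pose proof (gf_ge0 c m y Hc Hm Hy).
    set G := gf c m y.
    assert (0 <= t * (1 - t) * ((a - b) * (a - b))).
    { destruct Ht; apply Rmult_le_pos; [apply Rmult_le_pos; lra|apply Rle_0_sqr]. }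
    assert ((1 - t) * (a * a + a * G) + t * (b * b + b * G) -
      (((1 - t) * a + t * b) * ((1 - t) * a + t * b) + ((1 - t) * a + t * b) * G)
      = t * (1 - t) * ((a - b) * (a - b))) by ring.
    lra.
  - exists (fun x y => 2 * x + gf c m y); split; [|split].
    + intros y Hy; split.
      * intros x Hx.
        apply (filterlim_within_ext _ (fun h => 2 * x + gf c m y + h)).
        { intros h [Hh _]; field; exact Hh. }
        eapply filterlim_filter_le_1; [apply filter_le_within|].
        have H : continuous (fun h : R => (2 * x + gf c m y) + h) 0.
        { apply (cplus (fun _ : R => 2 * x + gf c m y) (fun h : R => h)); [apply cconst|apply continuous_id]. }
        unfold continuous in H; simpl in H; rewrite Rplus_0_r in H; exact H.
      * intros x Hx; apply (cont_R (fun t => 2 * t + gf c m y)).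
        apply (cplus (fun t : R => 2 * t) (fun _ : R => gf c m y)); [|apply cconst].
        apply cmult; [apply cconst|apply continuous_id].
    + intros; lra.
    + intros x y y' Hx Hy Hyy; pose proof (gf_smono c m y y' Hm Hyy); lra.
Qed.

Lemma sys_ineq x v k M : 0<=x<=2 -> 0<=v<=1 -> 0 <= k -> x+v-1 <= k -> 100 <= M ->
 26 <= 4*(x-2)*(x-2) + 8 + x*v + (2-x)*(1-v) + (v*v + v*(0 + (x+v) + M*k)) + ((1-v)*(1-v) + (1-v)*((M-2) + ((2-x)+(1-v)))).
Proof.
intros [Hx1 Hx2] [Hv1 Hv2] Hk0 Hk1 HM.
assert (Hxw : x * (1-v) <= 2) by nra.
assert (Hxw2 : 0 <= x * (1-v)) by nra.
assert (Hxv : 0 <= x * v) by nra.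
destruct (Rle_dec (1/2) v).
- assert (Hmk : M*v*((x+v-1)/2) <= M*v*k).
  { apply Rmult_le_compat_l; [apply Rmult_le_pos|]; lra. }
  assert (A1 : 0 <= M*(x*(v/2-1/4))) by (apply Rmult_le_pos; [lra|apply Rmult_le_pos; lra]).
  assert (A2 : 0 <= M*((1-v)*(1-v))) by (apply Rmult_le_pos; nra).
  assert (A3 : M*v*k + M*(1-v) >= M*x/4 + M*(1-v)/2) by nra.
  assert (A4 : x * (1-v) <= 2 * (1-v)) by nra.
  nra.
- assert (M*(1-v) >= M/2) by nra.
  assert (M*v*k >= 0) by (apply Rle_ge; apply Rmult_le_pos; [apply Rmult_le_pos|]; lra).
  nra.
Qed.

Definition i0 : 'I_2 := ord0.
Definition i1 : 'I_2 := ord_max.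

Lemma sum2 (F : 'I_2 -> R) : \rsum_(i < 2) F i = F i0 + F i1.
Proof.
  rewrite big_ord_recl big_ord1.
  have -> : lift ord0 ord0 = i1 by apply val_inj.
  reflexivity.
Qed.

Lemma ord2_cases (i : 'I_2) : i = i0 \/ i = i1.
Proof.
  case: i => [[|[|k]] Hk]; [left|right|]; try (apply val_inj; reflexivity).
  exfalso; move: Hk; rewrite !ltnS ltn0 //.
Qed.

Definition rr : 'I_2 -> R := fun i => if nat_of_ord i == 0%N then 2 else 1.
Definition JJ (M : R) : 'I_2 -> 'I_2 -> R -> R -> R := fun i l =>
  if nat_of_ord i == 0%N then (if nat_of_ord l == 0%N then Jf 0 0 else Jf 8 0)
  else (if nat_of_ord l == 0%N then Jf 0 M else Jf (M-2) 0).
Definition fhat : profile 2 2 := fun i l =>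
  if nat_of_ord i == 0%N then (if nat_of_ord l == 0%N then 2 else 0)
  else (if nat_of_ord l == 0%N then 0 else 1).
Definition fstar : profile 2 2 := fun i l =>
  if nat_of_ord i == 0%N then (if nat_of_ord l == 0%N then 0 else 2)
  else (if nat_of_ord l == 0%N then 1 else 0).

Lemma uc0 M (f : profile 2 2) : user_cost (JJ M) f i0 =
  Jf 0 0 (f i0 i0) (f i0 i0 + f i1 i0) + Jf 8 0 (f i0 i1) (f i0 i1 + f i1 i1).
Proof. rewrite /user_cost /link_flow !sum2 /JJ /=. reflexivity. Qed.

Lemma uc1 M (f : profile 2 2) : user_cost (JJ M) f i1 =
  Jf 0 M (f i1 i0) (f i0 i0 + f i1 i0) + Jf (M-2) 0 (f i1 i1) (f i0 i1 + f i1 i1).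
Proof. rewrite /user_cost /link_flow !sum2 /JJ /=. reflexivity. Qed.

Lemma feas_unpack (f : profile 2 2) : feasible rr f ->
  0 <= f i0 i0 /\ 0 <= f i0 i1 /\ 0 <= f i1 i0 /\ 0 <= f i1 i1 /\
  f i0 i0 + f i0 i1 = 2 /\ f i1 i0 + f i1 i1 = 1.
Proof.
  move=> [Hp Hs]; have := Hs i0; have := Hs i1; rewrite !sum2 /rr /=.
  move=> H1 H0; repeat split; auto.
Qed.

Lemma U0_eq M (f : profile 2 2) : feasible rr f ->
  user_cost (JJ M) f i0 = 4 * (f i0 i0 - 2) * (f i0 i0 - 2) + 8 + f i0 i0 * f i1 i0 + f i0 i1 * f i1 i1.
Proof.
  move=> /feas_unpack [? [? [? [? [H1 H2]]]]]; rewrite uc0 /Jf /gf.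
  replace (f i0 i1) with (2 - f i0 i0) by lra. ring.
Qed.

Lemma U0_ge M (f : profile 2 2) : feasible rr f -> 8 <= user_cost (JJ M) f i0.
Proof.
  move=> Hf; rewrite (U0_eq M f Hf); move: (feas_unpack f Hf) => [? [? [? [? _]]]].
  assert (0 <= f i0 i0 * f i1 i0) by (apply Rmult_le_pos; lra).
  assert (0 <= f i0 i1 * f i1 i1) by (apply Rmult_le_pos; lra).
  pose proof (Rle_0_sqr (f i0 i0 - 2)); unfold Rsqr in *; lra.
Qed.

Lemma U0_eq8 M (f : profile 2 2) : feasible rr f -> user_cost (JJ M) f i0 <= 8 ->
  f i0 i0 = 2 /\ f i0 i1 = 0 /\ f i1 i0 = 0 /\ f i1 i1 = 1.
Proof.
  move=> Hf; rewrite (U0_eq M f Hf); move: (feas_unpack f Hf) => [? [? [? [? [? ?]]]]] H.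
  assert (0 <= f i0 i0 * f i1 i0) by (apply Rmult_le_pos; lra).
  assert (0 <= f i0 i1 * f i1 i1) by (apply Rmult_le_pos; lra).
  pose proof (Rle_0_sqr (f i0 i0 - 2)); unfold Rsqr in *.
  assert (Hx0 : (f i0 i0 - 2) * (f i0 i0 - 2) = 0) by lra.
  assert (Hx : f i0 i0 = 2) by (apply Rmult_integral in Hx0; lra).
  rewrite Hx in H; assert (f i1 i0 = 0) by nra.
  repeat split; lra.
Qed.

Lemma fhat_feas : feasible rr fhat.
Proof.
  split.
  - move=> i l; rewrite /fhat; case: (_ == _); case: (_ == _); lra.
  - move=> i; rewrite sum2 /fhat /rr /=; case: (_ == _); lra.
Qed.

Lemma fstar_feas : feasible rr fstar.
Proof.
  split.
  - move=> i l; rewrite /fstar; case: (_ == _); case: (_ == _); lra.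
  - move=> i; rewrite sum2 /fstar /rr /=; case: (_ == _); lra.
Qed.

Lemma U0_hat M : user_cost (JJ M) fhat i0 = 8.
Proof. rewrite uc0 /fhat /= /Jf /gf; ring. Qed.

Lemma U1_hat M : user_cost (JJ M) fhat i1 = M.
Proof.
  rewrite uc1 /fhat /= /Jf /gf.
  replace (1 + 1 - 1) with 1 by ring. ring.
Qed.

Lemma sum_mulr n (p : 'I_n -> R) c : \rsum_(i < n) (p i * c) = (\rsum_(i < n) p i) * c.
Proof.
  elim: n p => [|n IH] p.
  - rewrite !big_ord0 Rmult_0_l //.
  - rewrite !big_ord_recr /= IH Rmult_plus_distr_r //.
Qed.

Lemma sum_ge0 n (F : 'I_n -> R) (P : pred 'I_n) : (forall i, 0 <= F i) ->
  0 <= \big[Rplus/0]_(i < n | P i) F i.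
Proof.
  move=> H; apply: (big_ind (fun x => 0 <= x)); [lra| |]; [move=> a b; lra|auto].
Qed.

Lemma each_zero n (F : 'I_n -> R) : (forall i, 0 <= F i) ->
  \rsum_(i < n) F i <= 0 -> forall i, F i = 0.
Proof.
  move=> H Hs i; move: Hs; rewrite (bigD1 i) //=.
  have := @sum_ge0 n F (fun j => j != i) H; have := H i; move=> A B.
  set S := (X in F i + X <= 0) => C. have B2 : 0 <= S := B. lra.
Qed.

Lemma G_eq M (h : 'I_2 -> R) : in_G rr (JJ M) h ->
  (forall i, h i <= user_cost (JJ M) fhat i) -> forall i, h i = user_cost (JJ M) fhat i.
Proof.
  move=> [n [p [fs [Hp [Hs [Hf Hh]]]]]] Hle.
  have Hsplit : \rsum_(m < n) (p m * (user_cost (JJ M) (fs m) i0 - 8)) = h i0 - 8.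
  { rewrite Hh.
    have -> : \rsum_(m < n) (p m * (user_cost (JJ M) (fs m) i0 - 8)) =
       \rsum_(m < n) (p m * user_cost (JJ M) (fs m) i0 + p m * (-8)).
    { apply eq_bigr => m _; ring. }
    rewrite big_split /= sum_mulr Hs; ring. }
  have H0 : forall j, 0 <= p j * (user_cost (JJ M) (fs j) i0 - 8).
  { move=> j; apply Rmult_le_pos; [have := Hp j; lra|].
    have := U0_ge M (fs j) (Hf j); lra. }
  have Hs0 : \rsum_(m < n) (p m * (user_cost (JJ M) (fs m) i0 - 8)) <= 0.
  { rewrite Hsplit; have := Hle i0; rewrite U0_hat; lra. }
  have Hall : forall m, user_cost (JJ M) (fs m) i0 = 8.
  { move=> m; have E := @each_zero n _ H0 Hs0 m; simpl in E.
    have Hpm := Hp m.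
    have : user_cost (JJ M) (fs m) i0 - 8 = 0.
    { apply (Rmult_eq_reg_l (p m)); [rewrite Rmult_0_r; exact E| lra]. }
    lra. }
  have Hall1 : forall m, user_cost (JJ M) (fs m) i1 = M.
  { move=> m; have := U0_eq8 M (fs m) (Hf m); rewrite Hall => H.
    rewrite uc1; move: (H (Rle_refl _)) => [-> [-> [-> ->]]].
    rewrite /Jf /gf. replace (2 + 0 - 1) with 1 by ring.
    replace (0 + 1 - 1) with 0 by ring. rewrite (kink_neg 0); [|lra]. ring. }
  move=> i; case: (ord2_cases i) => ->.
  - rewrite Hh U0_hat.
    rewrite (eq_bigr (fun m => p m * 8)); last by move=> m _; rewrite Hall.
    rewrite sum_mulr Hs; ring.
  - rewrite Hh U1_hat.
    rewrite (eq_bigr (fun m => p m * M)); last by move=> m _; rewrite Hall1.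
    rewrite sum_mulr Hs; ring.
Qed.

Lemma std_JJ M : 2 <= M -> standard_costs (JJ M).
Proof.
  move=> HM i l; rewrite /JJ.
  case: (_ == _); case: (_ == _); apply std_fam; lra.
Qed.

Lemma NEP_hat M : 2 <= M -> is_NEP rr (JJ M) fhat.
Proof.
  move=> HM; split; first exact fhat_feas.
  move=> i g Hg Heq; case: (ord2_cases i) => Ei; subst i.
  - rewrite U0_hat; exact (U0_ge M g Hg).
  - rewrite U1_hat uc1.
    have Hne : i0 <> i1 by move=> /(f_equal (@nat_of_ord 2)).
    have E0 : g i0 i0 = 2 by rewrite (Heq i0 i0 Hne).
    have E1 : g i0 i1 = 0 by rewrite (Heq i0 i1 Hne).
    move: (feas_unpack g Hg) => [_ [_ [Hv [Hw [_ Hvw]]]]].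
    rewrite E0 E1 /Jf /gf.
    rewrite (kink_pos (2 + g i1 i0 - 1)); [|lra].
    replace (0 + g i1 i1 - 1) with (g i1 i1 - 1) by ring.
    set v := g i1 i0 in Hv Hvw *; set w := g i1 i1 in Hw Hvw *.
    have Hk := kink_ge0 (w - 1).
    replace w with (1 - v) by lra.
    assert (0 <= M * (v * v)) by (apply Rmult_le_pos; nra).
    nra.
Qed.

Lemma not_ess M : ~ essential rr (JJ M) (user_cost (JJ M) fhat).
Proof.
  move=> [g [Hg Hlt]].
  have := G_eq M g Hg (fun i => Rlt_le _ _ (Hlt i)) i0.
  have := Hlt i0; lra.
Qed.

Lemma NBS_hat M : is_NBS rr (JJ M) (user_cost (JJ M) fhat) (user_cost (JJ M) fhat).
Proof.
  have Hin : in_G rr (JJ M) (user_cost (JJ M) fhat).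
  { exists 1%N, (fun _ => 1), (fun _ => fhat); split; [|split; [|split]].
    - move=> _; lra.
    - rewrite big_ord1; reflexivity.
    - move=> _; exact fhat_feas.
    - move=> i; rewrite big_ord1; ring. }
  split; first exact Hin.
  split; first (move=> i; lra).
  split.
  - move=> h Hh Hle; have E := G_eq M h Hh Hle.
    rewrite /nash_product (eq_bigr (fun i => user_cost (JJ M) fhat i - user_cost (JJ M) fhat i));
      [apply Rle_refl|move=> i _; rewrite E //].
  - move=> h Hh Hle _; exact (G_eq M h Hh Hle).
Qed.

Lemma sys_eq M (f : profile 2 2) : sys_cost (JJ M) f = user_cost (JJ M) f i0 + user_cost (JJ M) f i1.
Proof. rewrite /sys_cost sum2 //. Qed.

Lemma opt_star M : 100 <= M -> is_social_opt rr (JJ M) fstar /\ sys_cost (JJ M) fstar = 26.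
Proof.
  move=> HM.
  have Hs : sys_cost (JJ M) fstar = 26.
  { rewrite sys_eq uc0 uc1 /fstar /= /Jf /gf.
    replace (0 + 1 - 1) with 0 by ring. rewrite (kink_neg 0); [|lra]. ring. }
  split; [split; [exact fstar_feas|]|exact Hs].
  move=> g Hg; rewrite Hs sys_eq (U0_eq M g Hg) uc1.
  move: (feas_unpack g Hg) => [Hx [Hz [Hv [Hw [Hxz Hvw]]]]].
  rewrite /Jf /gf.
  replace (g i0 i1) with (2 - g i0 i0) by lra.
  replace (g i1 i1) with (1 - g i1 i0) by lra.
  have Hk := kink_ge0 (g i0 i0 + g i1 i0 - 1).
  have Hk2 := kink_ge (g i0 i0 + g i1 i0 - 1).
  have := sys_ineq (g i0 i0) (g i1 i0) (kink (g i0 i0 + g i1 i0 - 1)) M.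
  move=> H; eapply Rle_trans; [apply H; lra|]; right; ring.
Qed.


Theorem theorem4p1 :
  (* (1) the bargaining problem need not be essential; NBS = NEP costs *)
  (exists (N L : nat) (r : 'I_N -> R) (J : 'I_N -> 'I_L -> R -> R -> R)
          (fhat : profile N L),
     (0 < N)%nat /\ (0 < L)%nat /\ (forall i, 0 < r i)%R /\
     standard_costs J /\ is_NEP r J fhat /\
     ~ essential r J (user_cost J fhat) /\
     is_NBS r J (user_cost J fhat) (user_cost J fhat)) /\
  (* (2) PoS (and hence PoA) can be arbitrarily large *)
  (forall K : R, (0 < K)%R ->
     exists (N L : nat) (r : 'I_N -> R) (J : 'I_N -> 'I_L -> R -> R -> R)
            (fhat fstar : profile N L) (gt : 'I_N -> R),
       (0 < N)%nat /\ (0 < L)%nat /\ (forall i, 0 < r i)%R /\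
       standard_costs J /\ is_NEP r J fhat /\
       is_NBS r J (user_cost J fhat) gt /\
       is_social_opt r J fstar /\ (0 < sys_cost J fstar)%R /\
       (K <= (\big[Rplus/0%R]_(i < N) gt i) / sys_cost J fstar)%R /\
       (K <= sys_cost J fhat / sys_cost J fstar)%R).
Proof.
  have Hr : forall i, 0 < rr i by move=> i; rewrite /rr; case: (_ == _); lra.
  split.
  - exists 2%N, 2%N, rr, (JJ 100), fhat.
    split; [done|split; [done|split; [exact Hr|split; [apply std_JJ; lra|split]]]].
    + apply NEP_hat; lra.
    + split; [apply not_ess|apply NBS_hat].
  - move=> K HK.
    set M := 26 * K + 100.
    have HM : 100 <= M by rewrite /M; lra.
    have [Hopt Hs] := opt_star M HM.
    have Hsys : sys_cost (JJ M) fhat = 8 + M by rewrite sys_eq U0_hat U1_hat.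
    exists 2%N, 2%N, rr, (JJ M), fhat, fstar, (user_cost (JJ M) fhat).
    split; [done|split; [done|split; [exact Hr|split; [apply std_JJ; lra|split]]]].
    + apply NEP_hat; lra.
    + split; [apply NBS_hat|split; [exact Hopt|split; [rewrite Hs; lra|split]]].
      * rewrite sum2 U0_hat U1_hat Hs /M.
        apply (Rmult_le_reg_r 26); [lra|]; field_simplify; lra.
      * rewrite Hsys Hs /M.
        apply (Rmult_le_reg_r 26); [lra|]; field_simplify; lra.
Qed.
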